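(* Let $m\ge1$ be an integer, $\beta\in\mathbb R$, and let $T>0$ and $f:[-T,T]\to\mathbb R$ be the unique pair with $f''=-f^3+\beta f$, $f(\pm T)=0$, $f'(\pm T)=\mp m$, $f>0$ on $(-T,T)$. Define $k>0$ by $k^2=\tfrac12\bigl(1+\beta/\sqrt{2m^2+\beta^2}\bigr)$ and $K(k)=\int_0^1\frac{dx}{\sqrt{1-x^2}\sqrt{1-k^2x^2}}$. Then $$T=\frac{K(k)}{\sqrt[4]{2m^2+\beta^2}},\qquad \int_{-T}^Tf\,dt=2\sqrt2\arcsin(k),\qquad \int_{-T}^Tf^3\,dt=2\beta\sqrt2\arcsin(k)+2m,$$ $$\int_{-T}^Tf^5\,dt=(2m^2+3\beta^2)\sqrt2\arcsin(k)+3m\beta .$$ *)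

(* Defs.v *)
From Stdlib Require Import Reals Lra.
Open Scope R_scope.

Definition improper_RInt_right (g : R -> R) (a b l : R) : Prop :=
  exists pr : forall c, a <= c < b -> Riemann_integrable g a c,
    forall eps, eps > 0 -> exists delta, delta > 0 /\
      forall c (h : a <= c < b), b - c < delta -> Rabs (RiemannInt (pr c h) - l) < eps.

Definition K_integrand (k : R) (x : R) : R :=
  / (sqrt (1 - x ^ 2) * sqrt (1 - k ^ 2 * x ^ 2)).

Definition RInt_eq (g : R -> R) (a b v : R) : Prop :=
  exists pr : Riemann_integrable g a b, RiemannInt pr = v.

(* Main.v *)
Require Import Defs.
From Stdlib Require Import Reals Lra Lia.
From Coquelicot Require Import Coquelicot.
Open Scope R_scope.
Set Bullet Behavior "Strict Subproofs".
Lemma dpl_eq f x l l' : l = l' -> derivable_pt_lim f x l -> derivable_pt_lim f x l'.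
Proof. intros ->; auto. Qed.
Lemma dpl_pow (F : R -> R) n t a : derivable_pt_lim F t a ->
  derivable_pt_lim (fun t => F t ^ n) t (INR n * F t ^ (pred n) * a).
Proof. intro H. eapply dpl_eq. 2: exact (derivable_pt_lim_comp F (fun x => x ^ n) t a _ H (derivable_pt_lim_pow (F t) n)). ring. Qed.
Lemma dpl_div (f g : R -> R) t a b : derivable_pt_lim f t a -> derivable_pt_lim g t b -> g t <> 0 ->
  derivable_pt_lim (fun t => f t / g t) t ((a * g t - b * f t) / (g t) ^ 2).
Proof. intros. eapply dpl_eq. 2: apply (derivable_pt_lim_div f g); eauto. unfold Rsqr; simpl; field; auto. Qed.
Lemma dpl_mul (f g : R -> R) t a b : derivable_pt_lim f t a -> derivable_pt_lim g t b ->
  derivable_pt_lim (fun t => f t * g t) t (a * g t + f t * b).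
Proof. intros Hf Hg. exact (derivable_pt_lim_mult f g t a b Hf Hg). Qed.
Lemma dpl_plus (f g : R -> R) t a b : derivable_pt_lim f t a -> derivable_pt_lim g t b ->
  derivable_pt_lim (fun t => f t + g t) t (a + b).
Proof. intros. apply (derivable_pt_lim_plus f g); auto. Qed.
Lemma dpl_minus (f g : R -> R) t a b : derivable_pt_lim f t a -> derivable_pt_lim g t b ->
  derivable_pt_lim (fun t => f t - g t) t (a - b).
Proof. intros. apply (derivable_pt_lim_minus f g); auto. Qed.
Lemma dpl_const c t : derivable_pt_lim (fun _ => c) t 0.
Proof. apply derivable_pt_lim_const. Qed.
Lemma dpl_scal c (f : R -> R) t a : derivable_pt_lim f t a -> derivable_pt_lim (fun t => c * f t) t (c * a).
Proof. intro H. eapply dpl_eq. 2: exact (dpl_mul (fun _ => c) f t 0 a (dpl_const c t) H). simpl. ring. Qed.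
Lemma dpl_atan (f : R -> R) t a : derivable_pt_lim f t a -> derivable_pt_lim (fun t => atan (f t)) t (a / (1 + f t ^ 2)).
Proof. intro H. eapply dpl_eq. 2: exact (derivable_pt_lim_comp f atan t a _ H (derivable_pt_lim_atan (f t))). unfold Rdiv; ring. Qed.
Lemma dpl_sqrt (f : R -> R) t a : derivable_pt_lim f t a -> 0 < f t -> derivable_pt_lim (fun t => sqrt (f t)) t (a / (2 * sqrt (f t))).
Proof. intros H Hp. eapply dpl_eq. 2: exact (derivable_pt_lim_comp f sqrt t a _ H (derivable_pt_lim_sqrt (f t) Hp)). unfold Rdiv; ring. Qed.
Set Bullet Behavior "Strict Subproofs".

Lemma cont_cpt (g : R -> R) x : continuity_pt g x -> continuous g x.
Proof. intro H; now apply continuity_pt_filterlim. Qed.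

Lemma FTC_open (g G : R -> R) a b : a <= b ->
  (forall x, continuity_pt g x) ->
  (forall x, a < x < b -> derivable_pt_lim G x (g x)) ->
  (forall x, a <= x <= b -> continuity_pt G x) ->
  is_RInt g a b (G b - G a).
Proof.
  intros hab Hg HG HGc.
  pose (P := fun x => RInt g a x).
  assert (HP : forall x, is_derive P x (g x)).
  { intro x. apply (is_derive_RInt g P a).
    - apply filter_forall. intro y. unfold P.
      exact (RInt_correct g a y (ex_RInt_continuous g a y (fun z _ => cont_cpt g z (Hg z)))).
    - now apply cont_cpt. }
  destruct (MVT_gen (fun x => P x - G x) a b (fun _ => 0)) as [c [_ Hc]].
  - intros x Hx. rewrite Rmin_left in Hx by lra. rewrite Rmax_right in Hx by lra.
    replace 0 with (g x - g x) by ring. apply is_derive_Reals.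
    apply (derivable_pt_lim_minus P G). apply is_derive_Reals. apply HP. now apply HG.
  - intros x Hx. rewrite Rmin_left in Hx by lra. rewrite Rmax_right in Hx by lra.
    apply continuity_pt_minus. 2: now apply HGc.
    apply derivable_continuous_pt. exists (g x). apply is_derive_Reals. apply HP.
  - assert (Pa : P a = 0). { unfold P. rewrite RInt_point. reflexivity. }
    replace (G b - G a) with (P b) by lra.
    unfold P.
    exact (RInt_correct g a b (ex_RInt_continuous g a b (fun z _ => cont_cpt g z (Hg z)))).
Qed.

Lemma const_open (H : R -> R) a b : a <= b ->
  (forall x, a < x < b -> derivable_pt_lim H x 0) ->
  (forall x, a <= x <= b -> continuity_pt H x) -> H b = H a.
Proof.
  intros hab Hd Hc.
  destruct (MVT_gen H a b (fun _ => 0)) as [c [_ Hc']].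
  - intros x Hx. rewrite Rmin_left in Hx by lra. rewrite Rmax_right in Hx by lra.
    apply is_derive_Reals. now apply Hd.
  - intros x Hx. rewrite Rmin_left in Hx by lra. rewrite Rmax_right in Hx by lra. now apply Hc.
  - lra.
Qed.
Lemma dpl_opp (f : R -> R) t a : derivable_pt_lim f t a -> derivable_pt_lim (fun t => - f t) t (- a).
Proof. intro H. apply (derivable_pt_lim_opp f); auto. Qed.
Lemma dpl_id t : derivable_pt_lim (fun t => t) t 1.
Proof. apply derivable_pt_lim_id. Qed.

Ltac dpl_step := first [ apply dpl_const | eassumption | lra | apply dpl_minus | apply dpl_plus | apply dpl_opp
  | apply dpl_pow | apply dpl_div | apply dpl_mul | apply dpl_atan | apply dpl_sqrt | apply dpl_id ].
Ltac dpl := eapply dpl_eq; [ | repeat dpl_step ].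

Lemma cpt_plus (f g : R -> R) t : continuity_pt f t -> continuity_pt g t -> continuity_pt (fun t => f t + g t) t.
Proof. apply continuity_pt_plus. Qed.
Lemma cpt_minus (f g : R -> R) t : continuity_pt f t -> continuity_pt g t -> continuity_pt (fun t => f t - g t) t.
Proof. apply continuity_pt_minus. Qed.
Lemma cpt_mult (f g : R -> R) t : continuity_pt f t -> continuity_pt g t -> continuity_pt (fun t => f t * g t) t.
Proof. apply continuity_pt_mult. Qed.
Lemma cpt_opp (f : R -> R) t : continuity_pt f t -> continuity_pt (fun t => - f t) t.
Proof. apply continuity_pt_opp. Qed.
Lemma cpt_const c t : continuity_pt (fun _ => c) t.
Proof. apply continuity_pt_const. intros x y; reflexivity. Qed.
Lemma cpt_id t : continuity_pt (fun t => t) t.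
Proof. apply continuity_pt_id. Qed.
Lemma cpt_pow (f : R -> R) n t : continuity_pt f t -> continuity_pt (fun t => f t ^ n) t.
Proof. intro H. induction n as [|n IH]; simpl. apply cpt_const. apply cpt_mult; auto. Qed.
Lemma cpt_div (f g : R -> R) t : continuity_pt f t -> continuity_pt g t -> g t <> 0 -> continuity_pt (fun t => f t / g t) t.
Proof. intros. apply (continuity_pt_div f g); auto. Qed.
Lemma cpt_comp (f g : R -> R) t : continuity_pt f t -> continuity_pt g (f t) -> continuity_pt (fun t => g (f t)) t.
Proof. intros. apply (continuity_pt_comp f g); auto. Qed.
Lemma cpt_atan (f : R -> R) t : continuity_pt f t -> continuity_pt (fun t => atan (f t)) t.
Proof. intro H. apply (cpt_comp f atan); auto. apply derivable_continuous_pt. exists (/ (1 + f t ^ 2)). apply derivable_pt_lim_atan. Qed.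
Lemma cpt_sqrt (f : R -> R) t : continuity_pt f t -> 0 <= f t -> continuity_pt (fun t => sqrt (f t)) t.
Proof. intros H Hp. apply (cpt_comp f sqrt); auto. apply continuity_pt_sqrt; auto. Qed.

Ltac cpt_step := first [ apply cpt_const | solve [auto] | apply cpt_minus | apply cpt_plus | apply cpt_opp
  | apply cpt_pow | apply cpt_div | apply cpt_mult | apply cpt_atan | apply cpt_sqrt | apply cpt_id ].
Ltac cpt := repeat cpt_step.

Definition clamp (T t : R) := Rmax (-T) (Rmin T t).

Lemma clamp_in T t : 0 < T -> -T <= clamp T t <= T.
Proof. intro. unfold clamp, Rmax, Rmin. repeat destruct Rle_dec; lra. Qed.
Lemma clamp_id T t : -T <= t <= T -> clamp T t = t.
Proof. intro. unfold clamp, Rmax, Rmin. repeat destruct Rle_dec; lra. Qed.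
Lemma clamp_lip T y t : 0 < T -> Rabs (clamp T y - clamp T t) <= Rabs (y - t).
Proof. intro. unfold clamp, Rmax, Rmin. repeat destruct Rle_dec; unfold Rabs; repeat destruct Rcase_abs; lra. Qed.

Lemma clamp_cont (f : R -> R) T : 0 < T ->
  (forall t, -T <= t <= T -> limit1_in f (fun x => -T <= x <= T) (f t) t) ->
  forall t, continuity_pt (fun t => f (clamp T t)) t.
Proof.
  intros HT H t. unfold continuity_pt, continue_in, limit1_in, limit_in.
  intros eps Heps.
  destruct (H (clamp T t) (clamp_in T t HT) eps Heps) as [alp [Ha Hl]].
  exists alp. split; auto. intros y [_ Hy]. simpl in *. unfold R_dist in *.
  apply Hl. split. apply clamp_in; auto. simpl; unfold R_dist.
  eapply Rle_lt_trans. apply clamp_lip; auto. auto.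
Qed.

Lemma clamp_der (f : R -> R) T t l : -T < t < T -> derivable_pt_lim f t l ->
  derivable_pt_lim (fun t => f (clamp T t)) t l.
Proof.
  intros Ht H. apply is_derive_Reals. apply is_derive_Reals in H.
  apply (is_derive_ext_loc f). 2: exact H.
  apply (locally_interval _ t (-T) T). simpl; lra. simpl; lra.
  intros y H1 H2. simpl in *. rewrite clamp_id; auto; lra.
Qed.

Record Hyp (T beta m : R) (F F1 : R -> R) : Prop := mkHyp {
  hT : 0 < T; hm : 0 < m;
  hFc : forall t, continuity_pt F t; hF1c : forall t, continuity_pt F1 t;
  hdF : forall t, -T < t < T -> derivable_pt_lim F t (F1 t);
  hdF1 : forall t, -T < t < T -> derivable_pt_lim F1 t (- (F t) ^ 3 + beta * F t);
  hFa : F (-T) = 0; hFb : F T = 0; hF1a : F1 (-T) = m; hF1b : F1 T = - m;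
  hpos : forall t, -T < t < T -> 0 < F t }.

Definition sS m beta := sqrt (2 * m ^ 2 + beta ^ 2).

Lemma s_facts m beta : 0 < m -> 0 < sS m beta /\ sS m beta ^ 2 = 2 * m ^ 2 + beta ^ 2 /\
   0 < sS m beta - beta /\ 0 < sS m beta + beta.
Proof.
  intro hm. unfold sS.
  assert (h0 : 0 < 2 * m ^ 2 + beta ^ 2) by nra.
  assert (hs : 0 < sqrt (2 * m ^ 2 + beta ^ 2)) by (apply sqrt_lt_R0; auto).
  assert (h2 : sqrt (2 * m ^ 2 + beta ^ 2) ^ 2 = 2 * m ^ 2 + beta ^ 2) by (apply pow2_sqrt; lra).
  repeat split; auto; nra.
Qed.

Lemma energy T beta m F F1 : Hyp T beta m F F1 ->
  forall t, -T <= t <= T -> F1 t ^ 2 = m ^ 2 - F t ^ 4 / 2 + beta * F t ^ 2.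
Proof.
  intros H t Ht. destruct H as [hT hm hFc hF1c hdF hdF1 hFa hFb hF1a hF1b hpos].
  pose (E := fun t => F1 t ^ 2 + F t ^ 4 / 2 - beta * F t ^ 2).
  assert (E t = E (-T)).
  { apply const_open. lra.
    - intros x Hx. assert (hx : -T < x < T) by lra.
      pose proof (hdF x hx). pose proof (hdF1 x hx). unfold E.
      dpl. cbv beta. simpl. field.
    - intros x _. unfold E. cpt. }
  unfold E in H. rewrite hFa, hF1a in H. lra.
Qed.
Lemma psi_alg (y v r s beta m : R) : r ^ 2 = 2 -> 0 < r -> s ^ 2 = 2 * m ^ 2 + beta ^ 2 ->
  v ^ 2 = m ^ 2 - y ^ 4 / 2 + beta * y ^ 2 -> 0 < s - beta + y ^ 2 ->
  (r * (- y ^ 3 + beta * y) * (s - beta + y ^ 2) - 2 * y * v * (r * v)) / (s - beta + y ^ 2) ^ 2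
   / (1 + (r * v / (s - beta + y ^ 2)) ^ 2) = - y / r.
Proof.
  intros Hr Hr0 Hs Hv HD.
  assert (HD2 : (s - beta + y ^ 2) ^ 2 + 2 * v ^ 2 = 2 * s * (s - beta + y ^ 2)).
  { rewrite Hv. replace (m ^ 2) with ((s ^ 2 - beta ^ 2) / 2) by lra. field. }
  assert (Hs0 : 0 < s). { nra. }
  replace (1 + (r * v / (s - beta + y ^ 2)) ^ 2) with (2 * s / (s - beta + y ^ 2)).
  2: { field_simplify_eq. 2: lra. replace ((r * v) ^ 2) with (r ^ 2 * v ^ 2) by ring. rewrite Hr. lra. }
  replace (2 * y * v * (r * v)) with (2 * y * r * v ^ 2) by ring. rewrite Hv.
  replace (m ^ 2) with ((s ^ 2 - beta ^ 2) / 2) by lra.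
  field_simplify_eq. 2: split; lra.
  replace (r ^ 2) with 2 by lra. ring_simplify. 
  reflexivity.
Qed.

Lemma Dpos m beta y : 0 < m -> 0 < sS m beta - beta + y ^ 2.
Proof. intro hm. destruct (s_facts m beta hm) as [_ [_ [h _]]]. nra. Qed.

Lemma sqrt2_facts : sqrt 2 ^ 2 = 2 /\ 0 < sqrt 2.
Proof. split. apply pow2_sqrt; lra. apply sqrt_lt_R0; lra. Qed.

Lemma psi_der T beta m F F1 : Hyp T beta m F F1 -> forall t, -T < t < T ->
  derivable_pt_lim (fun t => atan (sqrt 2 * F1 t / (sS m beta - beta + F t ^ 2))) t (- F t / sqrt 2).
Proof.
  intros H t Ht. pose proof (energy T beta m F F1 H t ltac:(lra)) as Hen.
  destruct H as [hT hm hFc hF1c hdF hdF1 hFa hFb hF1a hF1b hpos].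
  pose proof (hdF t Ht). pose proof (hdF1 t Ht).
  pose proof (Dpos m beta (F t) hm) as HD.
  destruct (s_facts m beta hm) as [hs0 [hs2 _]]. destruct sqrt2_facts as [hr2 hr0].
  dpl. cbv beta.
  rewrite <- (psi_alg (F t) (F1 t) (sqrt 2) (sS m beta) beta m); auto.
  simpl. field. simpl in HD. split. lra. nra.
Qed.

Definition G1 m beta (F F1 : R -> R) t := - sqrt 2 * atan (sqrt 2 * F1 t / (sS m beta - beta + F t ^ 2)).

Lemma G1_der T beta m F F1 : Hyp T beta m F F1 -> forall t, -T < t < T ->
  derivable_pt_lim (G1 m beta F F1) t (F t).
Proof.
  intros H t Ht. pose proof (psi_der T beta m F F1 H t Ht) as Hp.
  destruct sqrt2_facts as [hr2 hr0].
  unfold G1. eapply dpl_eq. 2: apply (dpl_scal (- sqrt 2) _ t _ Hp). field. lra.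
Qed.

Lemma G1_cont T beta m F F1 : Hyp T beta m F F1 -> forall t, continuity_pt (G1 m beta F F1) t.
Proof.
  intros H t. pose proof (Dpos m beta (F t) (hm _ _ _ _ _ H)) as HD.
  pose proof (hFc _ _ _ _ _ H). pose proof (hF1c _ _ _ _ _ H).
  unfold G1. cpt. lra.
Qed.

Definition Aval m beta := atan (sqrt 2 * m / (sS m beta - beta)).

Lemma G1_bd T beta m F F1 : Hyp T beta m F F1 ->
  G1 m beta F F1 T - G1 m beta F F1 (- T) = 2 * sqrt 2 * Aval m beta.
Proof.
  intro H. destruct H as [hT hm hFc hF1c hdF hdF1 hFa hFb hF1a hF1b hpos].
  unfold G1, Aval. rewrite hFa, hFb, hF1a, hF1b.
  replace (sqrt 2 * - m / (sS m beta - beta + 0 ^ 2)) with (- (sqrt 2 * m / (sS m beta - beta))).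
  2: { destruct (s_facts m beta hm) as [_ [_ [h _]]]. simpl. field. lra. }
  replace (sqrt 2 * m / (sS m beta - beta + 0 ^ 2)) with (sqrt 2 * m / (sS m beta - beta)) by (simpl; f_equal; ring).
  rewrite atan_opp. ring.
Qed.

Lemma int1 T beta m F F1 : Hyp T beta m F F1 -> is_RInt F (-T) T (2 * sqrt 2 * Aval m beta).
Proof.
  intro H. rewrite <- (G1_bd T beta m F F1 H).
  apply FTC_open. pose proof (hT _ _ _ _ _ H); lra.
  apply (hFc _ _ _ _ _ H). apply (G1_der _ _ _ _ _ H). intros; apply (G1_cont _ _ _ _ _ H).
Qed.

Definition G3 m beta (F F1 : R -> R) t := beta * G1 m beta F F1 t - F1 t.

Lemma int3 T beta m F F1 : Hyp T beta m F F1 ->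
  is_RInt (fun t => F t ^ 3) (-T) T (2 * beta * sqrt 2 * Aval m beta + 2 * m).
Proof.
  intro H. replace (2 * beta * sqrt 2 * Aval m beta + 2 * m) with (G3 m beta F F1 T - G3 m beta F F1 (-T)).
  2: { unfold G3. pose proof (G1_bd T beta m F F1 H). rewrite (hF1a _ _ _ _ _ H), (hF1b _ _ _ _ _ H). nra. }
  apply FTC_open. pose proof (hT _ _ _ _ _ H); lra.
  - intro t. pose proof (hFc _ _ _ _ _ H). cpt.
  - intros t Ht. pose proof (G1_der _ _ _ _ _ H t Ht). pose proof (hdF1 _ _ _ _ _ H t Ht).
    unfold G3. dpl. simpl. ring.
  - intros t _. pose proof (G1_cont _ _ _ _ _ H). pose proof (hF1c _ _ _ _ _ H). unfold G3. cpt.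
Qed.

Definition G5 m beta (F F1 : R -> R) t := m ^ 2 * G1 m beta F F1 t + 3 * beta / 2 * G3 m beta F F1 t - F t ^ 2 * F1 t / 2.

Lemma int5 T beta m F F1 : Hyp T beta m F F1 ->
  is_RInt (fun t => F t ^ 5) (-T) T ((2 * m ^ 2 + 3 * beta ^ 2) * sqrt 2 * Aval m beta + 3 * m * beta).
Proof.
  intro H. replace ((2 * m ^ 2 + 3 * beta ^ 2) * sqrt 2 * Aval m beta + 3 * m * beta) with (G5 m beta F F1 T - G5 m beta F F1 (-T)).
  2: { unfold G5, G3. pose proof (G1_bd T beta m F F1 H).
       rewrite (hF1a _ _ _ _ _ H), (hF1b _ _ _ _ _ H), (hFa _ _ _ _ _ H), (hFb _ _ _ _ _ H). 
       replace (G1 m beta F F1 T) with (G1 m beta F F1 (- T) + 2 * sqrt 2 * Aval m beta) by lra. field. }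
  apply FTC_open. pose proof (hT _ _ _ _ _ H); lra.
  - intro t. pose proof (hFc _ _ _ _ _ H). cpt.
  - intros t Ht. pose proof (G1_der _ _ _ _ _ H t Ht). pose proof (hdF1 _ _ _ _ _ H t Ht).
    pose proof (hdF _ _ _ _ _ H t Ht).
    pose proof (energy T beta m F F1 H t ltac:(lra)) as Hen.
    assert (HG3 : derivable_pt_lim (G3 m beta F F1) t (F t ^ 3)).
    { unfold G3. dpl. simpl. ring. }
    unfold G5. dpl. cbv beta. simpl. simpl in Hen.
    assert (E2 : F1 t * F1 t = m * m - F t * (F t * (F t * F t)) / 2 + beta * (F t * F t)) by lra.
    repeat rewrite Rmult_assoc. rewrite E2. field.
  - intros t _. pose proof (G1_cont _ _ _ _ _ H). pose proof (hF1c _ _ _ _ _ H). pose proof (hFc _ _ _ _ _ H).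
    assert (continuity_pt (G3 m beta F F1) t) by (unfold G3; cpt).
    unfold G5. cpt.
Qed.

Definition kk m beta := sqrt ((1 + beta / sS m beta) / 2).

Lemma kk_facts m beta : 0 < m -> 0 < kk m beta /\ kk m beta < 1 /\
  kk m beta ^ 2 = (sS m beta + beta) / (2 * sS m beta).
Proof.
  intro hm. destruct (s_facts m beta hm) as [hs [hs2 [h1 h2]]].
  assert (Hk2 : kk m beta ^ 2 = (sS m beta + beta) / (2 * sS m beta)).
  { unfold kk. rewrite pow2_sqrt. field. lra. 
    apply Rmult_le_pos. 2: lra. replace (1 + beta / sS m beta) with ((sS m beta + beta) / sS m beta) by (field; lra).
    apply Rlt_le, Rdiv_lt_0_compat; lra. }
  assert (Hk0 : 0 < kk m beta).
  { unfold kk. apply sqrt_lt_R0. replace (1 + beta / sS m beta) with ((sS m beta + beta) / sS m beta) by (field; lra).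
    apply Rmult_lt_0_compat. apply Rdiv_lt_0_compat; lra. lra. }
  repeat split; auto.
  assert (kk m beta ^ 2 < 1). { rewrite Hk2. apply (Rmult_lt_reg_r (2 * sS m beta)). lra.
    field_simplify. lra. lra. }
  nra.
Qed.

Lemma sq_inj a b : 0 <= a -> 0 <= b -> a ^ 2 = b ^ 2 -> a = b.
Proof. intros. nra. Qed.

Lemma A_asin m beta : 0 < m -> Aval m beta = asin (kk m beta).
Proof.
  intro hm. destruct (kk_facts m beta hm) as [hk0 [hk1 hk2]].
  destruct (s_facts m beta hm) as [hs [hs2 [h1 h2]]].
  destruct sqrt2_facts as [hr2 hr0].
  rewrite asin_atan by lra. unfold Aval. f_equal.
  assert (H1k : 0 < 1 - (kk m beta)²) by (unfold Rsqr; nra).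
  assert (Hsq : sqrt (1 - (kk m beta)²) ^ 2 = 1 - (kk m beta)²) by (apply pow2_sqrt; lra).
  assert (Hsq0 : 0 < sqrt (1 - (kk m beta)²)) by (apply sqrt_lt_R0; lra).
  apply sq_inj.
  - apply Rlt_le, Rdiv_lt_0_compat; nra.
  - apply Rlt_le, Rdiv_lt_0_compat; nra.
  - unfold Rdiv. rewrite !Rpow_mult_distr. rewrite !pow_inv. rewrite Hsq.
    unfold Rsqr. replace (kk m beta * kk m beta) with (kk m beta ^ 2) by ring. rewrite hk2, hr2.
    replace (m ^ 2) with ((sS m beta ^ 2 - beta ^ 2) / 2) by lra.
    field. repeat split; try lra.
Qed.

Definition psi m beta (F F1 : R -> R) t := atan (sqrt 2 * F1 t / (sS m beta - beta + F t ^ 2)).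
Definition xx m beta F F1 t := sin (psi m beta F F1 t) / kk m beta.

Lemma sin_atan2 u : sin (atan u) ^ 2 = u ^ 2 / (1 + u ^ 2).
Proof.
  rewrite sin_atan. unfold Rdiv. rewrite Rpow_mult_distr, pow_inv. unfold Rsqr.
  rewrite pow2_sqrt. f_equal. f_equal. ring. nra.
Qed.

Lemma sin_psi2 T beta m F F1 : Hyp T beta m F F1 -> forall t, -T <= t <= T ->
  sin (psi m beta F F1 t) ^ 2 = kk m beta ^ 2 - F t ^ 2 / (2 * sS m beta).
Proof.
  intros H t Ht. pose proof (energy T beta m F F1 H t Ht) as Hen.
  pose proof (hm _ _ _ _ _ H) as hm.
  pose proof (Dpos m beta (F t) hm) as HD.
  destruct (s_facts m beta hm) as [hs [hs2 [h1 h2]]].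
  destruct (kk_facts m beta hm) as [hk0 [hk1 hk2]].
  destruct sqrt2_facts as [hr2 hr0].
  unfold psi. rewrite sin_atan2. rewrite hk2.
  replace ((sqrt 2 * F1 t / (sS m beta - beta + F t ^ 2)) ^ 2) with
     (2 * F1 t ^ 2 / (sS m beta - beta + F t ^ 2) ^ 2).
  2: { unfold Rdiv. rewrite !Rpow_mult_distr, hr2. rewrite pow_inv. ring. }
  rewrite Hen. replace (m ^ 2) with ((sS m beta ^ 2 - beta ^ 2) / 2) by lra.
  set (s := sS m beta) in *. set (y := F t) in *.
  field. split. lra. split. lra. nra.
Qed.

Lemma cpt_sin (f : R -> R) t : continuity_pt f t -> continuity_pt (fun t => sin (f t)) t.
Proof. intro H. apply (cpt_comp f sin); auto. apply continuity_sin. Qed.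
Lemma dpl_sin (f : R -> R) t a : derivable_pt_lim f t a -> derivable_pt_lim (fun t => sin (f t)) t (cos (f t) * a).
Proof. intro H. eapply dpl_eq. 2: exact (derivable_pt_lim_comp f sin t a _ H (derivable_pt_lim_sin (f t))). unfold Rdiv; ring. Qed.

Lemma sqrt_eq A B : 0 <= B -> B ^ 2 = A -> sqrt A = B.
Proof. intros HB <-. apply sqrt_pow2; auto. Qed.

Lemma psi_ends T beta m F F1 : Hyp T beta m F F1 ->
  psi m beta F F1 (-T) = asin (kk m beta) /\ psi m beta F F1 T = - asin (kk m beta).
Proof.
  intro H. pose proof (A_asin m beta (hm _ _ _ _ _ H)) as HA. unfold Aval in HA.
  destruct H as [hT hm hFc hF1c hdF hdF1 hFa hFb hF1a hF1b hpos].
  destruct (s_facts m beta hm) as [hs [hs2 [h1 h2]]].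
  unfold psi. rewrite hFa, hFb, hF1a, hF1b. split.
  - rewrite <- HA. f_equal. simpl. field. lra.
  - rewrite <- HA. rewrite <- atan_opp. f_equal. simpl. field. lra.
Qed.

Lemma xx_ends T beta m F F1 : Hyp T beta m F F1 ->
  xx m beta F F1 (-T) = 1 /\ xx m beta F F1 T = -1.
Proof.
  intro H. destruct (psi_ends T beta m F F1 H) as [H1 H2].
  destruct (kk_facts m beta (hm _ _ _ _ _ H)) as [hk0 [hk1 hk2]].
  unfold xx. rewrite H1, H2, sin_neg, sin_asin by lra. split; field; lra.
Qed.

Lemma xx_cont T beta m F F1 : Hyp T beta m F F1 -> forall t, continuity_pt (xx m beta F F1) t.
Proof.
  intros H t. pose proof (Dpos m beta (F t) (hm _ _ _ _ _ H)) as HD.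
  destruct (kk_facts m beta (hm _ _ _ _ _ H)) as [hk0 [hk1 hk2]].
  pose proof (hFc _ _ _ _ _ H). pose proof (hF1c _ _ _ _ _ H).
  unfold xx, psi. apply cpt_div. apply cpt_sin. cpt. lra. apply cpt_const. lra.
Qed.

Lemma xx_sq T beta m F F1 : Hyp T beta m F F1 -> forall t, -T <= t <= T ->
  1 - xx m beta F F1 t ^ 2 = F t ^ 2 / (2 * sS m beta * kk m beta ^ 2).
Proof.
  intros H t Ht. pose proof (sin_psi2 T beta m F F1 H t Ht) as Hs.
  destruct (kk_facts m beta (hm _ _ _ _ _ H)) as [hk0 [hk1 hk2]].
  destruct (s_facts m beta (hm _ _ _ _ _ H)) as [hs [hs2 [h1 h2]]].
  unfold xx. unfold Rdiv at 1. rewrite Rpow_mult_distr, Hs, pow_inv. field. lra.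
Qed.

Lemma xx_in T beta m F F1 : Hyp T beta m F F1 -> forall t, -T < t < T ->
  -1 < xx m beta F F1 t < 1.
Proof.
  intros H t Ht. pose proof (xx_sq T beta m F F1 H t ltac:(lra)) as Hq.
  pose proof (hpos _ _ _ _ _ H t Ht).
  destruct (kk_facts m beta (hm _ _ _ _ _ H)) as [hk0 [hk1 hk2]].
  destruct (s_facts m beta (hm _ _ _ _ _ H)) as [hs [hs2 [h1 h2]]].
  assert (0 < F t ^ 2 / (2 * sS m beta * kk m beta ^ 2)).
  { apply Rdiv_lt_0_compat. apply pow_lt; lra. apply Rmult_lt_0_compat; [lra | apply pow_lt; lra]. }
  assert (Hx : xx m beta F F1 t ^ 2 < 1) by lra.
  set (x := xx m beta F F1 t) in *. split; nra.
Qed.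

Lemma xx_der T beta m F F1 : Hyp T beta m F F1 -> forall t, -T < t < T ->
  derivable_pt_lim (xx m beta F F1) t (cos (psi m beta F F1 t) * (- F t / sqrt 2) / kk m beta).
Proof.
  intros H t Ht. pose proof (psi_der T beta m F F1 H t Ht) as Hp.
  destruct (kk_facts m beta (hm _ _ _ _ _ H)) as [hk0 [hk1 hk2]].
  unfold xx. eapply dpl_eq. 2: apply (dpl_div (fun t => sin (psi m beta F F1 t)) (fun _ => kk m beta)).
  3: apply dpl_const. 3: cbv beta; lra.
  2: apply dpl_sin; exact Hp.
  cbv beta. destruct sqrt2_facts. field. lra.
Qed.

Lemma cpt_inv (f : R -> R) t : continuity_pt f t -> f t <> 0 -> continuity_pt (fun t => / f t) t.
Proof. intros. apply (continuity_pt_inv f); auto. Qed.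

Lemma dpl_compf (f g : R -> R) t a b : derivable_pt_lim f t a -> derivable_pt_lim g (f t) b ->
  derivable_pt_lim (fun t => g (f t)) t (b * a).
Proof. intros. exact (derivable_pt_lim_comp f g t a b H H0). Qed.

Lemma K_pos_aux k x : 0 < k < 1 -> -1 < x < 1 -> 0 < 1 - x ^ 2 /\ 0 < 1 - k ^ 2 * x ^ 2.
Proof.
  intros Hk Hx. assert (h1 : 0 < 1 - x ^ 2) by nra.
  assert (h2 : k ^ 2 * x ^ 2 <= x ^ 2). { assert (0 <= x ^ 2) by nra. assert (k ^ 2 <= 1) by nra. nra. }
  split; lra.
Qed.

Lemma K_pos k x : 0 < k < 1 -> -1 < x < 1 -> 0 < K_integrand k x.
Proof.
  intros Hk Hx. destruct (K_pos_aux k x Hk Hx). unfold K_integrand.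
  apply Rinv_0_lt_compat. apply Rmult_lt_0_compat; apply sqrt_lt_R0; auto.
Qed.

Lemma K_cont k x : 0 < k < 1 -> -1 < x < 1 -> continuity_pt (K_integrand k) x.
Proof.
  intros Hk Hx. destruct (K_pos_aux k x Hk Hx). unfold K_integrand.
  apply cpt_inv. apply cpt_mult; apply cpt_sqrt; cpt; lra.
  apply Rgt_not_eq, Rlt_gt, Rmult_lt_0_compat; apply sqrt_lt_R0; auto.
Qed.

Definition Phi k c := RInt (K_integrand k) 0 c.

Lemma Phi_der k x : 0 < k < 1 -> -1 < x < 1 -> derivable_pt_lim (Phi k) x (K_integrand k x).
Proof.
  intros Hk Hx. apply is_derive_Reals.
  apply (is_derive_RInt (K_integrand k) (Phi k) 0 x).
  - apply (locally_interval _ x (-1) 1). simpl; lra. simpl; lra.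
    intros y H1 H2. simpl in H1, H2. unfold Phi.
    assert (HC : forall z, Rmin 0 y <= z <= Rmax 0 y -> continuous (K_integrand k) z).
    { intros z Hz. apply cont_cpt. apply K_cont; auto.
      unfold Rmin, Rmax in Hz. destruct Rle_dec; lra. }
    exact (RInt_correct (K_integrand k) 0 y (ex_RInt_continuous (K_integrand k) 0 y HC)).
  - apply cont_cpt, K_cont; auto.
Qed.

Lemma Phi_cont k x : 0 < k < 1 -> -1 < x < 1 -> continuity_pt (Phi k) x.
Proof. intros. apply derivable_continuous_pt. exists (K_integrand k x). apply Phi_der; auto. Qed.

Lemma Phi_mono k a b : 0 < k < 1 -> -1 < a -> a <= b -> b < 1 -> Phi k a <= Phi k b.
Proof.
  intros Hk Ha Hab Hb.
  destruct (MVT_gen (Phi k) a b (K_integrand k)) as [c [Hc Hv]].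
  - intros x Hx. rewrite Rmin_left in Hx by lra. rewrite Rmax_right in Hx by lra.
    apply is_derive_Reals, Phi_der; auto; lra.
  - intros x Hx. rewrite Rmin_left in Hx by lra. rewrite Rmax_right in Hx by lra.
    apply Phi_cont; auto; lra.
  - rewrite Rmin_left in Hc by lra. rewrite Rmax_right in Hc by lra.
    pose proof (K_pos k c Hk ltac:(lra)). nra.
Qed.

Lemma Phi0 k : Phi k 0 = 0.
Proof. unfold Phi. rewrite RInt_point. reflexivity. Qed.

Lemma Phi_odd k x : 0 < k < 1 -> 0 <= x < 1 -> Phi k (- x) = - Phi k x.
Proof.
  intros Hk Hx.
  assert (E : (fun y => Phi k y + Phi k (- y)) x = (fun y => Phi k y + Phi k (- y)) 0).
  { apply (const_open (fun y => Phi k y + Phi k (- y)) 0 x). lra.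
    - intros y Hy. eapply dpl_eq. 2: apply dpl_plus.
      2: apply Phi_der; auto; lra.
      2: apply (dpl_compf (fun y => - y) (Phi k)). 2: apply dpl_opp, dpl_id.
      2: apply Phi_der; auto; lra.
      unfold K_integrand. replace ((- y) ^ 2) with (y ^ 2) by ring. ring.
    - intros y Hy. apply cpt_plus. apply Phi_cont; auto; lra.
      apply (cpt_comp (fun y => - y) (Phi k)). apply cpt_opp, cpt_id. apply Phi_cont; auto; lra. }
  simpl in E. rewrite Ropp_0, Phi0 in E. lra.
Qed.

Lemma Psi_der T beta m F F1 : Hyp T beta m F F1 -> forall t, -T < t < T ->
  derivable_pt_lim (fun t => Phi (kk m beta) (xx m beta F F1 t) + sqrt (sS m beta) * t) t 0.
Proof.
  intros H t Ht.
  pose proof (hm _ _ _ _ _ H) as hm.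
  destruct (kk_facts m beta hm) as [hk0 [hk1 hk2]].
  destruct (s_facts m beta hm) as [hs [hs2 [h1 h2]]].
  destruct sqrt2_facts as [hr2 hr0].
  pose proof (xx_in T beta m F F1 H t Ht) as Hx.
  pose proof (xx_der T beta m F F1 H t Ht) as Hxd.
  pose proof (xx_sq T beta m F F1 H t ltac:(lra)) as Hq.
  pose proof (hpos _ _ _ _ _ H t Ht) as HF.
  assert (hq0 : 0 < sqrt (sS m beta)) by (apply sqrt_lt_R0; lra).
  assert (hq2 : sqrt (sS m beta) ^ 2 = sS m beta) by (apply pow2_sqrt; lra).
  pose proof (Phi_der (kk m beta) (xx m beta F F1 t) ltac:(lra) Hx) as HP.
  eapply dpl_eq. 2: apply dpl_plus. 2: apply (dpl_compf (xx m beta F F1) (Phi (kk m beta))); eauto.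
  2: apply dpl_scal, dpl_id.
  assert (Hc : 0 < cos (psi m beta F F1 t)).
  { unfold psi. pose proof (atan_bound (sqrt 2 * F1 t / (sS m beta - beta + F t ^ 2))).
    apply cos_gt_0; lra. }
  assert (S1 : sqrt (1 - xx m beta F F1 t ^ 2) = F t / (sqrt 2 * sqrt (sS m beta) * kk m beta)).
  { apply sqrt_eq. apply Rlt_le, Rdiv_lt_0_compat. lra. apply Rmult_lt_0_compat; [apply Rmult_lt_0_compat|]; lra.
    rewrite Hq. unfold Rdiv. rewrite Rpow_mult_distr, pow_inv, !Rpow_mult_distr, hr2, hq2. field. lra. }
  assert (S2 : sqrt (1 - kk m beta ^ 2 * xx m beta F F1 t ^ 2) = cos (psi m beta F F1 t)).
  { apply sqrt_eq. lra. unfold xx. pose proof (sin2_cos2 (psi m beta F F1 t)) as Hsc. unfold Rsqr in Hsc.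
    field_simplify. lra. lra. }
  unfold K_integrand. rewrite S1, S2. field. repeat split; lra.
Qed.

Lemma Psi_const T beta m F F1 : Hyp T beta m F F1 -> forall t1 t2, -T < t1 < T -> -T < t2 < T ->
  Phi (kk m beta) (xx m beta F F1 t1) + sqrt (sS m beta) * t1 =
  Phi (kk m beta) (xx m beta F F1 t2) + sqrt (sS m beta) * t2.
Proof.
  intros H.
  assert (Hw : forall t1 t2, -T < t1 < T -> -T < t2 < T -> t1 <= t2 ->
    Phi (kk m beta) (xx m beta F F1 t1) + sqrt (sS m beta) * t1 =
    Phi (kk m beta) (xx m beta F F1 t2) + sqrt (sS m beta) * t2).
  { intros t1 t2 H1 H2 H12. symmetry.
    apply (const_open (fun t => Phi (kk m beta) (xx m beta F F1 t) + sqrt (sS m beta) * t) t1 t2); auto.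
    - intros x Hx. apply (Psi_der T beta m F F1 H). lra.
    - intros x Hx. apply derivable_continuous_pt. exists 0. apply (Psi_der T beta m F F1 H). lra. }
  intros t1 t2 H1 H2. destruct (Rle_dec t1 t2). auto. symmetry. apply Hw; auto. lra.
Qed.

Lemma cont_near f x0 eps : continuity_pt f x0 -> 0 < eps ->
  exists alp, 0 < alp /\ forall y, Rabs (y - x0) < alp -> Rabs (f y - f x0) < eps.
Proof.
  intros Hc He. unfold continuity_pt, continue_in, limit1_in, limit_in in Hc.
  destruct (Hc eps He) as [alp [Ha Hl]]. exists alp. split. lra.
  intros y Hy. destruct (Req_dec y x0) as [->|Hne].
  - rewrite Rminus_diag, Rabs_R0. lra.
  - apply (Hl y). split. split. exact I. auto. exact Hy.
Qed.

Lemma T_main T beta m F F1 : Hyp T beta m F F1 ->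
  improper_RInt_right (K_integrand (kk m beta)) 0 1 (sqrt (sS m beta) * T).
Proof.
  intros H.
  pose proof (hm _ _ _ _ _ H) as hm. pose proof (hT _ _ _ _ _ H) as hT.
  destruct (kk_facts m beta hm) as [hk0 [hk1 hk2]].
  destruct (s_facts m beta hm) as [hs [hs2 [h1 h2]]].
  assert (hq0 : 0 < sqrt (sS m beta)) by (apply sqrt_lt_R0; lra).
  set (q := sqrt (sS m beta)) in *. set (k := kk m beta) in *.
  set (X := xx m beta F F1).
  assert (HXc : forall t, continuity_pt X t) by apply (xx_cont T beta m F F1 H).
  destruct (xx_ends T beta m F F1 H) as [Xa Xb]. fold X in Xa, Xb.
  assert (HXi : forall t, -T < t < T -> -1 < X t < 1) by apply (xx_in T beta m F F1 H).
  set (C := Phi k (X 0) + q * 0).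
  assert (HC : forall t, -T < t < T -> Phi k (X t) = C - q * t).
  { intros t Ht. unfold C. pose proof (Psi_const T beta m F F1 H t 0 Ht ltac:(lra)) as E.
    change (Phi k (X t) + q * t = Phi k (X 0) + q * 0) in E. lra. }
  set (L := q * T + C).
  assert (nearA : forall eta, 0 < eta -> forall c, c < 1 -> exists t, -T < t < T /\ t + T < eta /\ c < X t).
  { intros eta Heta c Hc.
    destruct (cont_near X (-T) (1 - c) (HXc (-T)) ltac:(lra)) as [alp [Ha Hl]].
    exists (-T + Rmin (Rmin alp T) eta / 2).
    assert (0 < Rmin (Rmin alp T) eta) by (repeat apply Rmin_pos; lra).
    assert (Rmin (Rmin alp T) eta <= eta) by apply Rmin_r.
    assert (Rmin (Rmin alp T) eta <= T) by (eapply Rle_trans; [apply Rmin_l | apply Rmin_r]).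
    assert (Rmin (Rmin alp T) eta <= alp) by (eapply Rle_trans; [apply Rmin_l | apply Rmin_l]).
    split. lra. split. lra.
    pose proof (Hl (-T + Rmin (Rmin alp T) eta / 2)) as Hl'. rewrite Xa in Hl'.
    assert (Rabs (- T + Rmin (Rmin alp T) eta / 2 - - T) < alp) by (rewrite Rabs_right; lra).
    specialize (Hl' H4). apply Rabs_def2 in Hl'. lra. }
  assert (nearB : forall eta, 0 < eta -> forall c, c < 1 -> exists t, -T < t < T /\ T - t < eta /\ X t < - c).
  { intros eta Heta c Hc.
    destruct (cont_near X T (1 - c) (HXc T) ltac:(lra)) as [alp [Ha Hl]].
    exists (T - Rmin (Rmin alp T) eta / 2).
    assert (0 < Rmin (Rmin alp T) eta) by (repeat apply Rmin_pos; lra).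
    assert (Rmin (Rmin alp T) eta <= eta) by apply Rmin_r.
    assert (Rmin (Rmin alp T) eta <= T) by (eapply Rle_trans; [apply Rmin_l | apply Rmin_r]).
    assert (Rmin (Rmin alp T) eta <= alp) by (eapply Rle_trans; [apply Rmin_l | apply Rmin_l]).
    split. lra. split. lra.
    pose proof (Hl (T - Rmin (Rmin alp T) eta / 2)) as Hl'. rewrite Xb in Hl'.
    assert (Rabs (T - Rmin (Rmin alp T) eta / 2 - T) < alp) by (rewrite Rabs_left; lra).
    specialize (Hl' H4). apply Rabs_def2 in Hl'. lra. }
  assert (Upper : forall c, 0 <= c < 1 -> Phi k c < L).
  { intros c Hc. destruct (nearA 1 ltac:(lra) c ltac:(lra)) as [t [Ht [_ Hct]]].
    pose proof (HXi t Ht).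
    pose proof (Phi_mono k c (X t) ltac:(lra) ltac:(lra) ltac:(lra) ltac:(lra)).
    rewrite HC in H1 by auto. unfold L. nra. }
  assert (Lower : forall eps, 0 < eps -> exists c0, 0 <= c0 < 1 /\ forall c, c0 <= c < 1 -> L - eps < Phi k c).
  { intros eps He. destruct (nearA (eps / q) ltac:(apply Rdiv_lt_0_compat; lra) (1/2) ltac:(lra)) as [t [Ht [Hte Hct]]].
    pose proof (HXi t Ht).
    exists (X t). split. lra. intros c Hc.
    pose proof (Phi_mono k (X t) c ltac:(lra) ltac:(lra) ltac:(lra) ltac:(lra)).
    rewrite HC in H1 by auto. unfold L.
    assert (q * (t + T) < eps). { apply (Rmult_lt_compat_l q) in Hte; auto. field_simplify in Hte; lra. }
    lra. }
  assert (Cge : 0 <= C).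
  { destruct (Rle_dec 0 C) as [|Hn]; auto. exfalso.
    destruct (nearB ((- C) / q) ltac:(apply Rdiv_lt_0_compat; lra) (1/2) ltac:(lra)) as [t [Ht [Hte Hct]]].
    pose proof (HXi t Ht).
    pose proof (Upper (- X t) ltac:(lra)).
    pose proof (Phi_odd k (- X t) ltac:(lra) ltac:(lra)) as Ho.
    rewrite Ropp_involutive, HC in Ho by auto. unfold L in H1.
    assert (q * (T - t) < - C). { apply (Rmult_lt_compat_l q) in Hte; auto. field_simplify in Hte; lra. }
    lra. }
  assert (Cle : C <= 0).
  { destruct (Rle_dec C 0) as [|Hn]; auto. exfalso.
    destruct (Lower C ltac:(lra)) as [c0 [Hc0 Hl]].
    destruct (nearB T hT c0 ltac:(lra)) as [t [Ht [_ Hct]]].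
    pose proof (HXi t Ht).
    pose proof (Hl (- X t) ltac:(lra)).
    pose proof (Phi_odd k (- X t) ltac:(lra) ltac:(lra)) as Ho.
    rewrite Ropp_involutive, HC in Ho by auto. unfold L in H1.
    nra. }
  assert (C0 : C = 0) by lra.
  assert (Hint : forall c, 0 <= c < 1 -> ex_RInt (K_integrand k) 0 c).
  { intros c Hc.
    assert (HC' : forall z, Rmin 0 c <= z <= Rmax 0 c -> continuous (K_integrand k) z).
    { intros z Hz. apply cont_cpt, K_cont. lra.
      rewrite Rmin_left in Hz by lra. rewrite Rmax_right in Hz by lra. lra. }
    exact (ex_RInt_continuous (K_integrand k) 0 c HC'). }
  exists (fun c h => ex_RInt_Reals_0 _ _ _ (Hint c h)).
  intros eps He. destruct (Lower eps He) as [c0 [Hc0 Hl]].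
  exists (1 - c0). split. lra. intros c h Hc.
  rewrite <- RInt_Reals. fold (Phi k c).
  pose proof (Hl c ltac:(lra)). pose proof (Upper c h).
  unfold L in *. rewrite C0 in *. rewrite Rabs_left; lra.
Qed.

Lemma conv (G g : R -> R) a b v : a < b -> is_RInt G a b v -> (forall x, a < x < b -> G x = g x) -> RInt_eq g a b v.
Proof.
  intros hab HG He.
  assert (Hg : is_RInt g a b v).
  { apply (is_RInt_ext G). intros x Hx. rewrite Rmin_left in Hx by lra. rewrite Rmax_right in Hx by lra. auto. exact HG. }
  exists (ex_RInt_Reals_0 g a b (ex_intro _ v Hg)).
  rewrite <- RInt_Reals. exact (is_RInt_unique g a b v Hg).
Qed.

Theorem lemma4p2 (m : nat) (beta T : R) (f f1 : R -> R) :
  (1 <= m)%nat ->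
  0 < T ->
  (forall t, -T <= t <= T -> limit1_in f (fun x => -T <= x <= T) (f t) t) ->
  (forall t, -T <= t <= T -> limit1_in f1 (fun x => -T <= x <= T) (f1 t) t) ->
  (forall t, -T < t < T -> derivable_pt_lim f t (f1 t)) ->
  (forall t, -T < t < T -> derivable_pt_lim f1 t (- (f t) ^ 3 + beta * f t)) ->
  f (- T) = 0 -> f T = 0 ->
  f1 (- T) = INR m -> f1 T = - INR m ->
  (forall t, -T < t < T -> 0 < f t) ->
  let k := sqrt ((1 + beta / sqrt (2 * INR m ^ 2 + beta ^ 2)) / 2) in
  (exists Kk, improper_RInt_right (K_integrand k) 0 1 Kk /\
      T = Kk / sqrt (sqrt (2 * INR m ^ 2 + beta ^ 2))) /\
  RInt_eq f (- T) T (2 * sqrt 2 * asin k) /\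
  RInt_eq (fun t => f t ^ 3) (- T) T (2 * beta * sqrt 2 * asin k + 2 * INR m) /\
  RInt_eq (fun t => f t ^ 5) (- T) T
    ((2 * INR m ^ 2 + 3 * beta ^ 2) * sqrt 2 * asin k + 3 * INR m * beta).
Proof.
  intros Hm HT Hfc Hf1c Hdf Hdf1 Hfa Hfb Hf1a Hf1b Hpos k.
  assert (hm : 0 < INR m) by (apply lt_0_INR; lia).
  pose (F := fun t => f (clamp T t)). pose (F1 := fun t => f1 (clamp T t)).
  assert (cl_int : forall t, -T <= t <= T -> clamp T t = t) by (intros; apply clamp_id; auto).
  assert (H : Hyp T beta (INR m) F F1).
  { constructor; auto.
    - apply clamp_cont; auto.
    - apply clamp_cont; auto.
    - intros t Ht. unfold F1. rewrite cl_int by lra. apply clamp_der; auto.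
    - intros t Ht. unfold F. rewrite cl_int by lra. apply clamp_der; auto.
    - unfold F. rewrite cl_int by lra. auto.
    - unfold F. rewrite cl_int by lra. auto.
    - unfold F1. rewrite cl_int by lra. auto.
    - unfold F1. rewrite cl_int by lra. auto.
    - intros t Ht. unfold F. rewrite cl_int by lra. auto. }
  assert (Hk : k = kk (INR m) beta) by reflexivity.
  assert (HA : Aval (INR m) beta = asin k) by (rewrite Hk; apply A_asin; auto).
  destruct (s_facts (INR m) beta hm) as [hs _].
  assert (hq0 : 0 < sqrt (sS (INR m) beta)) by (apply sqrt_lt_R0; lra).
  assert (Heq : forall g : R -> R, forall x, -T < x < T -> g (F x) = g (f x)).
  { intros g x Hx. unfold F. rewrite cl_int by lra. auto. }
  split; [|split; [|split]].
  - exists (sqrt (sS (INR m) beta) * T). split.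
    + rewrite Hk. apply (T_main T beta (INR m) F F1 H).
    + unfold sS in *. field. lra.
  - rewrite <- HA. apply (conv F). lra. apply (int1 T beta (INR m) F F1 H).
    intros x Hx. exact (Heq (fun y => y) x Hx).
  - rewrite <- HA. apply (conv (fun t => F t ^ 3)). lra. apply (int3 T beta (INR m) F F1 H).
    intros x Hx. exact (Heq (fun y => y ^ 3) x Hx).
  - rewrite <- HA. apply (conv (fun t => F t ^ 5)). lra. apply (int5 T beta (INR m) F F1 H).
    intros x Hx. exact (Heq (fun y => y ^ 5) x Hx).
Qed.
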